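(* Let $q$ be a prime power, let $k\ge1$, $n=2k$, and let $t\ge0$ be an even integer. Let $\delta\in\mathbb{F}_{q^n}$ satisfy $\delta^{q^k}=-\delta$, and let $L(x)=\sum_i a_i x^{q^i}$ be a $q$-polynomial with all coefficients $a_i\in\mathbb{F}_{q^k}$. Then $f(x)=(x^{q^k}-x+\delta)^t+L(x)$ is a permutation polynomial of $\mathbb{F}_{q^n}$ if and only if $L(x)$ is a permutation polynomial of $\mathbb{F}_{q^n}$.
   Context: A polynomial is a permutation polynomial of $\mathbb{F}_{q^n}$ if it induces a bijection of $\mathbb{F}_{q^n}$. *)

(* Defs.v *)
From mathcomp Require Import all_boot all_order all_algebra all_field.
Set Implicit Arguments. Unset Strict Implicit. Unset Printing Implicit Defensive.
Import GRing.Theory.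
Local Open Scope ring_scope.

Definition prime_power (q : nat) : Prop :=
  exists p e : nat, prime p /\ (0 < e)%N /\ q = (p ^ e)%N.

Definition qpoly_eval (F : nzRingType) (q : nat) (a : seq F) (x : F) : F :=
  \sum_(i < size a) a`_i * x ^+ (q ^ i).

Definition is_perm_map (F : finFieldType) (f : F -> F) : Prop := bijective f.

(* Main.v *)
Require Import Defs.
From mathcomp Require Import all_boot all_order all_algebra all_field.
From mathcomp Require Import ring.
Import GRing.Theory.
Local Open Scope ring_scope.

Section Aux.
Variables (F : finFieldType) (q : nat).
Hypothesis natq : forall m, [pchar F].-nat (q ^ m)%N.

Lemma FD m (x y : F) : (x + y) ^+ (q ^ m) = x ^+ (q ^ m) + y ^+ (q ^ m).
Proof. exact: exprDn_pchar. Qed.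

Lemma FN m (x : F) : (- x) ^+ (q ^ m) = - x ^+ (q ^ m).
Proof. exact: exprNn_pchar. Qed.

Lemma FB m (x y : F) : (x - y) ^+ (q ^ m) = x ^+ (q ^ m) - y ^+ (q ^ m).
Proof. by rewrite FD FN. Qed.

Lemma LD (a : seq F) x y : qpoly_eval q a (x + y) = qpoly_eval q a x + qpoly_eval q a y.
Proof. rewrite /qpoly_eval -big_split; apply: eq_bigr => i _; by rewrite FD mulrDr. Qed.

Lemma LN (a : seq F) x : qpoly_eval q a (- x) = - qpoly_eval q a x.
Proof. rewrite /qpoly_eval -sumrN; apply: eq_bigr => i _; by rewrite FN mulrN. Qed.

Lemma LB (a : seq F) x y : qpoly_eval q a (x - y) = qpoly_eval q a x - qpoly_eval q a y.
Proof. by rewrite LD LN. Qed.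

Lemma LF (a : seq F) k x : (0 < q ^ k)%N -> all (fun c => c ^+ (q ^ k) == c) a ->
  qpoly_eval q a (x ^+ (q ^ k)) = (qpoly_eval q a x) ^+ (q ^ k).
Proof.
move=> qpos Ha; rewrite /qpoly_eval.
rewrite (big_morph (fun y : F => y ^+ (q ^ k)) (FD k) (expr0n _ _)).
rewrite eqn0Ngt qpos /=.
apply: eq_bigr => i _.
rewrite exprMn (eqP (allP Ha _ (mem_nth 0 (ltn_ord i)))).
by rewrite -!exprM mulnC.
Qed.

End Aux.

Theorem mainTheorem3 (F : finFieldType) (q k t : nat) (delta : F) (a : seq F) :
  prime_power q -> (0 < k)%N -> #|F| = (q ^ (2 * k))%N -> ~~ odd t ->
  delta ^+ (q ^ k) = - delta ->
  all (fun c => c ^+ (q ^ k) == c) a ->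
  (is_perm_map (fun x : F => (x ^+ (q ^ k) - x + delta) ^+ t + qpoly_eval q a x)
   <-> is_perm_map (fun x : F => qpoly_eval q a x)).
Proof.
move=> [p [e [pp [e0 qE]]]] k0 cardF todd hd Ha.
have pF : p \in [pchar F].
  by apply: (@card_finPcharP F p (e * (2 * k))) => //; rewrite cardF qE !expnM.
have natq : forall m, [pchar F].-nat (q ^ m)%N.
  move=> m; rewrite (eq_pnat _ (pcharf_eq pF)) qE -expnM pnatX pnat_id //.
have qpos : (0 < q ^ k)%N by rewrite qE -expnM expn_gt0 prime_gt0.
set N := (q ^ k)%N in qpos hd Ha *.
have inv : forall x : F, x ^+ N ^+ N = x.
  by move=> x; rewrite -exprM -expnD addnn -mul2n -cardF expf_card.
set T := fun x : F => x ^+ N - x.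
set L := fun x => qpoly_eval q a x.
have TD : forall x y, T (x + y) = T x + T y.
  by move=> x y; rewrite /T FD //; ring.
have LT : forall x, L (T x) = T (L x).
  by move=> x; rewrite /L /T LB // LF.
have ev : forall y : F, (- y) ^+ t = y ^+ t.
  by move=> y; rewrite -mulN1r exprMn -signr_odd (negbTE todd) expr0 mul1r.
have hfix : forall x, ((T x + delta) ^+ t) ^+ N = (T x + delta) ^+ t.
  move=> x; rewrite -exprM mulnC exprM /T FD // FB // inv hd -ev; congr (_ ^+ t); ring.
have LTF : forall x : F, T ((T x + delta) ^+ t) = 0.
  by move=> x; rewrite /T hfix subrr.
split=> [fbij | [Li LK Ki]].
-
  apply: injF_bij.
  suff K0 : forall u, L u = 0 -> u = 0.
    move=> x z /= Hxz; apply/eqP; rewrite -subr_eq0; apply/eqP/K0; rewrite /L LB //; move: Hxz; rewrite /L /= => ->; by rewrite subrr.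
  move=> u Lu; apply/eqP; apply/negP => /negP unz.
  have finj := bij_inj fbij.
  have shift : forall x w : F, w != 0 -> L w = 0 ->
      (T (x + w) + delta) ^+ t = (T x + delta) ^+ t -> False.
    move=> x w wnz Lw Tw; move/negP: wnz; apply; apply/eqP.
    apply/(addrI x); rewrite addr0; apply: finj => /=.
    rewrite LD //; change ((T (x + w) + delta) ^+ t + (L x + L w) = (T x + delta) ^+ t + L x); by rewrite Tw Lw addr0.
  have LFN : forall x, L (x ^+ N) = L x ^+ N by move=> x; exact: LF.
  have LDD : forall x y, L (x + y) = L x + L y by move=> x y; exact: LD.
  have T0 : T 0 = 0 by rewrite /T expr0n eqn0Ngt qpos /= subrr.
  have [w0|wnz] := eqVneq (u + u ^+ N) 0; last first.
    apply: (shift 0 _ wnz).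
      by rewrite LDD LFN Lu expr0n eqn0Ngt qpos /= addr0.
    have -> : T (0 + (u + u ^+ N)) = T 0.
      by rewrite add0r T0 /T FD // inv; ring.
    by [].
  have uN : u ^+ N = - u by apply/eqP; rewrite -addr_eq0 addrC w0.
  have [Tu0|Tunz] := eqVneq (T u) 0.
    by apply: (shift 0 u unz Lu); rewrite add0r Tu0 T0.
  have two0 : (2 : F) != 0.
    apply: contraNneq Tunz => h2; rewrite /T uN.
    by rewrite -opprD -mulr2n -mulr_natl h2 mul0r oppr0.
  have two2 : (2 : F) ^+ N = 2 by rewrite FD // expr1n.
  pose x0 := - (u - delta) / 2.
  have Tx0 : T x0 = u - delta.
    rewrite /T /x0 exprMn FN // FB // uN hd exprVn two2.
    field; exact: two0.
  apply: (shift x0 u unz Lu).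
  rewrite TD Tx0 /T uN -ev; congr (_ ^+ t); ring.
- apply: injF_bij => x z /= Hxz.
  have H1 : (T x + delta) ^+ t + L x = (T z + delta) ^+ t + L z by exact: Hxz.
  have H2 : L (T x) = L (T z).
    by rewrite !LT; move: (congr1 T H1); rewrite !TD !LTF !add0r.
  have H3 : T x = T z by rewrite -(LK (T x)) H2 LK.
  move: H1; rewrite H3 => /addrI; exact: (can_inj LK).
Qed.
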